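(* Let $A=\prod_{i=1}^n A_i$ where each $A_i$ is either $\mathsf P^1$ or $\mathbb F_2$, equipped with the product bicharacter. Let $\mathcal G,\mathcal M\subseteq A$ be subgroups (gauge group and measurement group) with $\mathcal G\subseteq\mathcal M^\perp$. Let $\Gamma\subseteq 2^{[n]}$ and let $P=\mathop{\ast}_{\gamma\in\Gamma}P_\gamma$ be a probability distribution on $A$, where each $P_\gamma$ is a probability distribution on $A$ with $P_\gamma(e)=0$ unless $\operatorname{supp}(e)\subseteq\gamma$. Suppose $P$ is correctable, meaning: (1) for all $\gamma_1,\gamma_2\in\Gamma$, $\gamma_1\cup\gamma_2$ is a correctable region, and (2) all moments $E(a)=\sum_{e\in A}\langle a,e\rangle P(e)$ are positive for all $a\in A$. Then the logical channel $P_L(e)=\frac{1}{|\mathcal G|}\sum_{s\in\mathcal G}P(es)$ is uniquely determined by the moments $E(s)$, $s\in\mathcal M$; i.e. any two correctable channels with the same $\Gamma$ whose moments agree on $\mathcal M$ have the same logical channel.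
   Context: $\mathsf P^1$ is the single-qubit Pauli group modulo phases, $\{I,X,Y,Z\}$, with bicharacter $\langle a,b\rangle=+1$ if $a,b$ commute and $-1$ otherwise; on $\mathbb F_2$ the bicharacter is $\langle x,y\rangle=(-1)^{xy}$. The product bicharacter on $A$ is $\langle a,b\rangle=\prod_i\langle a_i,b_i\rangle$. For a subgroup $B\subseteq A$, $B^\perp=\{a\in A:\langle a,b\rangle=1\ \forall b\in B\}$. The support of $a\in A$ is $\{i:a_i\neq I\}$ (identity element). A region $R\subseteq[n]$ is correctable if every $e\in\mathcal M^\perp$ with $\operatorname{supp}(e)\subseteq R$ lies in $\mathcal G$. Convolution: $(f\ast g)(a)=\sum_{b\in A}f(b)g(ab^{-1})$. *)

(* Defs.v *)
From HB Require Import structures.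
From mathcomp Require Import all_boot all_order all_algebra.
Set Implicit Arguments. Unset Strict Implicit. Unset Printing Implicit Defensive.
Import Order.TTheory GRing.Theory Num.Theory.
Local Open Scope ring_scope.

(* Single-site groups.  kind = true : P^1 (Pauli group mod phases), encoded
   as F_2^2 via  I=(0,0), X=(1,0), Z=(0,1), Y=(1,1);
   kind = false : F_2, encoded as bool. *)
Definition fac (b : bool) : finType :=
  if b then ((bool * bool)%type : finType) else (bool : finType).

Definition fac_mul (b : bool) : fac b -> fac b -> fac b :=
  if b as b' return fac b' -> fac b' -> fac b'
  then fun x y => (x.1 (+) y.1, x.2 (+) y.2)
  else fun x y => x (+) y.

Definition fac_one (b : bool) : fac b :=
  if b as b' return fac b' then (false, false) else false.

(* fac_anti x y = true iff <x,y> = -1 (anticommute / xy = 1 in F_2). *)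
Definition fac_anti (b : bool) : fac b -> fac b -> bool :=
  if b as b' return fac b' -> fac b' -> bool
  then fun x y => (x.1 && y.2) (+) (x.2 && y.1)
  else fun x y => x && y.

Definition grp (n : nat) (kind : 'I_n -> bool) : finType :=
  {dffun forall i : 'I_n, fac (kind i)}.

Section Ops.
Variables (n : nat) (kind : 'I_n -> bool).
Local Notation A := (grp kind).

Definition gmul (a b : A) : A := [ffun i => fac_mul (a i) (b i)].
Definition gone : A := [ffun i => fac_one (kind i)].
(* every element is an involution, so a^{-1} = a *)
Definition ginv (a : A) : A := a.

Definition ganti (a b : A) : bool := \big[addb/false]_(i < n) fac_anti (a i) (b i).
Definition bichar (R : nzRingType) (a b : A) : R := (-1) ^+ ganti a b.

Definition is_subgroup (S : {set A}) : Prop :=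
  gone \in S /\ (forall a b, a \in S -> b \in S -> gmul a (ginv b) \in S).

Definition perp (B : {set A}) : {set A} :=
  [set a | [forall b in B, ~~ ganti a b]].

Definition supp (a : A) : {set 'I_n} := [set i | a i != fac_one (kind i)].

Definition correctable_region (G M : {set A}) (Rg : {set 'I_n}) : Prop :=
  forall e, e \in perp M -> supp e \subset Rg -> e \in G.

Section Dist.
Variable R : realFieldType.

Definition is_prob (f : A -> R) : Prop :=
  (forall a, 0 <= f a) /\ \sum_(a : A) f a = 1.

Definition conv (f g : A -> R) : A -> R :=
  fun a => \sum_(b : A) f b * g (gmul a (ginv b)).

Definition delta1 : A -> R := fun a => if a == gone then 1 else 0.

Definition conv_family (Gamma : {set {set 'I_n}}) (Pg : {set 'I_n} -> A -> R)
  : A -> R := \big[conv/delta1]_(g in Gamma) Pg g.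

Definition moment (P : A -> R) (a : A) : R := \sum_(e : A) bichar R a e * P e.

Definition logical_channel (G : {set A}) (P : A -> R) (e : A) : R :=
  (#|G|%:R)^-1 * \sum_(s in G) P (gmul e s).

Definition local_family (Gamma : {set {set 'I_n}}) (Pg : {set 'I_n} -> A -> R)
  : Prop :=
  forall g, g \in Gamma ->
    is_prob (Pg g) /\ (forall e, ~~ (supp e \subset g) -> Pg g e = 0).

Definition correctable_channel (G M : {set A}) (Gamma : {set {set 'I_n}})
  (Pg : {set 'I_n} -> A -> R) : Prop :=
  (forall g1 g2, g1 \in Gamma -> g2 \in Gamma ->
     correctable_region G M (g1 :|: g2)) /\
  (forall a, 0 < moment (conv_family Gamma Pg) a).

End Dist.
End Ops.

(* Main.v *)
Require Import Defs.
From mathcomp Require Import all_boot all_order all_algebra ring.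
Set Implicit Arguments. Unset Strict Implicit. Unset Printing Implicit Defensive.
Import Order.TTheory GRing.Theory Num.Theory.
Local Open Scope ring_scope.

Lemma fac_antiC b (x y : fac b) : fac_anti x y = fac_anti y x.
Proof. by move: x y; case: b => /= [[x1 x2] [y1 y2]|x y] /=; do ?case: x1; do ?case: x2; do ?case: y1; do ?case: y2; do ?case: x; do ?case: y. Qed.

Lemma fac_anti_mull b (x y z : fac b) : fac_anti (fac_mul x y) z = fac_anti x z (+) fac_anti y z.
Proof. by move: x y z; case: b => /= [[x1 x2] [y1 y2] [z1 z2]|x y z] /=; do ?case: x1; do ?case: x2; do ?case: y1; do ?case: y2; do ?case: z1; do ?case: z2; do ?case: x; do ?case: y; do ?case: z. Qed.

Lemma fac_anti1 b (x : fac b) : fac_anti x (fac_one b) = false.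
Proof. by move: x; case: b => /= [[x1 x2]|x] /=; do ?case: x1; do ?case: x2; do ?case: x. Qed.

Lemma fac_mulC b (x y : fac b) : fac_mul x y = fac_mul y x.
Proof. by move: x y; case: b => /= [[x1 x2] [y1 y2]|x y] /=; rewrite ?(addbC x1) ?(addbC x2) ?(addbC x). Qed.

Lemma fac_mulA b (x y z : fac b) : fac_mul x (fac_mul y z) = fac_mul (fac_mul x y) z.
Proof. by move: x y z; case: b => /= [[x1 x2] [y1 y2] [z1 z2]|x y z] /=; rewrite ?addbA. Qed.

Lemma fac_mul1 b (x : fac b) : fac_mul x (fac_one b) = x.
Proof. by move: x; case: b => /= [[x1 x2]|x] /=; rewrite ?addbF. Qed.

Lemma fac_mulxx b (x : fac b) : fac_mul x x = fac_one b.
Proof. by move: x; case: b => /= [[x1 x2]|x] /=; rewrite ?addbb. Qed.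

Definition wit b : fac b -> fac b :=
  if b as b' return fac b' -> fac b' then fun x => if x.1 then (false, true) else (true, false)
  else fun x => true.

Lemma wit_anti b (x : fac b) : x != fac_one b -> fac_anti x (wit x).
Proof. by move: x; case: b => /= [[x1 x2]|x] /=; do ?case: x1; do ?case: x2; do ?case: x. Qed.


Section G.
Variables (n : nat) (kind : 'I_n -> bool).
Local Notation A := (grp kind).
Local Notation one := (gone kind).
Implicit Types (a b c d e x y h : A) (g : {set 'I_n}).

Lemma gmulC a b : gmul a b = gmul b a.
Proof. by apply/ffunP => i; rewrite !ffunE fac_mulC. Qed.
Lemma gmulA a b c : gmul a (gmul b c) = gmul (gmul a b) c.
Proof. by apply/ffunP => i; rewrite !ffunE fac_mulA. Qed.
Lemma gmul1 a : gmul a one = a.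
Proof. by apply/ffunP => i; rewrite !ffunE fac_mul1. Qed.
Lemma gmulxx a : gmul a a = one.
Proof. by apply/ffunP => i; rewrite !ffunE fac_mulxx. Qed.
Lemma gmulK a b : gmul (gmul a b) b = a.
Proof. by rewrite -gmulA gmulxx gmul1. Qed.
Lemma gmul_inj b : injective (fun x => gmul x b).
Proof. by move=> x y /= h; rewrite -(gmulK x b) h gmulK. Qed.
Lemma gmul_eq1 a b : (gmul a b == one) = (a == b).
Proof.
apply/eqP/eqP => [h|->]; last exact: gmulxx.
by rewrite -(gmulK a b) h gmulC gmul1.
Qed.

Lemma gantiC a b : ganti a b = ganti b a.
Proof. by apply: eq_bigr => i _; rewrite fac_antiC. Qed.
Lemma ganti_mull a b c : ganti (gmul a b) c = ganti a c (+) ganti b c.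
Proof.
rewrite /ganti -big_split /=; apply: eq_bigr => i _.
by rewrite ffunE fac_anti_mull.
Qed.
Lemma ganti_mulr a b c : ganti c (gmul a b) = ganti c a (+) ganti c b.
Proof. by rewrite gantiC ganti_mull !(gantiC c). Qed.
Lemma ganti1 a : ganti a one = false.
Proof. by rewrite /ganti big1 // => i _; rewrite ffunE fac_anti1. Qed.

Variable R : realFieldType.
Local Notation chi := (bichar R).

Lemma chiC a b : chi a b = chi b a.
Proof. by rewrite /bichar gantiC. Qed.
Lemma chi_mull a b c : chi (gmul a b) c = chi a c * chi b c.
Proof. by rewrite /bichar ganti_mull signr_addb. Qed.
Lemma chi_mulr a b c : chi c (gmul a b) = chi c a * chi c b.
Proof. by rewrite /bichar ganti_mulr signr_addb. Qed.
Lemma chi1 a : chi a one = 1.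
Proof. by rewrite /bichar ganti1. Qed.
Lemma chi_sq a b : chi a b * chi a b = 1.
Proof. by rewrite /bichar -signr_addb addbb. Qed.

Lemma sum_chi_flip (H : {set A}) x h0 :
  (forall h, (gmul h h0 \in H) = (h \in H)) -> ganti x h0 ->
  \sum_(h in H) chi x h = 0.
Proof.
move=> HH hx.
have e : \sum_(h in H) chi x h = - \sum_(h in H) chi x h.
  rewrite {1}(reindex_inj (@gmul_inj h0)) /= -sumrN.
  apply: eq_big => h; first by rewrite HH.
  by move=> _; rewrite chi_mulr {2}/bichar hx mulrN1.
have : 2%:R * \sum_(h in H) chi x h = 0 by rewrite mulr_natl mulr2n {1}e addNr.
by move/eqP; rewrite mulf_eq0 pnatr_eq0 /= => /eqP.
Qed.

Lemma sum_chi_triv (H : {set A}) x :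
  (forall h, h \in H -> ganti x h = false) ->
  \sum_(h in H) chi x h = #|H|%:R.
Proof.
move=> hx; rewrite -sumr_const; apply: eq_bigr => h hH.
by rewrite /bichar hx.
Qed.


Definition proj (g : {set 'I_n}) b : A :=
  [ffun i => if i \in g then b i else fac_one (kind i)].
Definition Aset (g : {set 'I_n}) : {set A} := [set d : A | supp d \subset g].

Lemma in_supp a i : (i \in supp a) = (a i != fac_one (kind i)).
Proof. by rewrite inE. Qed.

Lemma proj_mul g a b : proj g (gmul a b) = gmul (proj g a) (proj g b).
Proof. by apply/ffunP => i; rewrite !ffunE; case: ifP => // _; rewrite fac_mul1. Qed.
Lemma proj_proj g a : proj g (proj g a) = proj g a.
Proof. by apply/ffunP => i; rewrite ffunE; case: ifP => // ig; rewrite ffunE ig. Qed.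

Lemma ganti_proj g b e : supp e \subset g -> ganti b e = ganti (proj g b) e.
Proof.
move=> se; apply: eq_bigr => i _; rewrite ffunE; case: ifP => // ig.
have : i \notin supp e by apply: contraFN ig; apply: (subsetP se).
by rewrite in_supp negbK => /eqP ->; rewrite !fac_anti1.
Qed.

Lemma supp_mul d e : supp (gmul d e) \subset supp d :|: supp e.
Proof.
apply/subsetP => i; rewrite !inE ffunE; apply: contraR.
by rewrite negb_or !negbK => /andP [/eqP -> /eqP ->]; rewrite fac_mul1.
Qed.

Lemma Aset_mul g d e : d \in Aset g -> e \in Aset g -> gmul d e \in Aset g.
Proof.
rewrite !inE => hd he; apply: subset_trans (supp_mul d e) _.
by rewrite subUset hd he.
Qed.

Lemma one_Aset g : one \in Aset g.
Proof. by rewrite inE; apply/subsetP => i; rewrite in_supp ffunE eqxx. Qed.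

Lemma sum_chi_Aset g x :
  \sum_(d in Aset g) chi x d = #|Aset g|%:R * (proj g x == one)%:R.
Proof.
have [px|px] := eqVneq (proj g x) one.
  rewrite mulr1; apply: sum_chi_triv => d; rewrite inE => sd.
  by rewrite (ganti_proj x sd) px gantiC ganti1.
rewrite mulr0.
have [i Hi] : exists i, proj g x i != fac_one (kind i).
  apply/existsP; apply: contraR px => /existsPn h; apply/eqP/ffunP => i.
  by rewrite [one i]ffunE; apply/eqP; move: (h i); rewrite negbK.
move: Hi; rewrite ffunE; case: ifP => [ig xi|]; last by rewrite eqxx.
pose d0 : A := [ffun j => if j == i then wit (x j) else fac_one (kind j)].
have d0A : d0 \in Aset g.
  rewrite inE; apply/subsetP => j; rewrite in_supp ffunE.
  by case: ifP => [/eqP -> _ //|_]; rewrite eqxx.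
apply: (@sum_chi_flip _ x d0).
  move=> h; apply/idP/idP => hh; last exact: Aset_mul.
  by rewrite -(gmulK h d0); apply: Aset_mul.
rewrite /ganti (bigD1 i) //= big1 ?addbF; first by rewrite ffunE eqxx wit_anti.
by move=> j /negbTE ji; rewrite ffunE ji fac_anti1.
Qed.

Lemma Aset_T : Aset setT = setT.
Proof. by apply/setP => d; rewrite !inE subsetT. Qed.
Lemma proj_T x : proj setT x = x.
Proof. by apply/ffunP => i; rewrite ffunE inE. Qed.

Lemma sum_chi_all x : \sum_(d : A) chi x d = #|A|%:R * (x == one)%:R.
Proof.
have := sum_chi_Aset setT x; rewrite Aset_T proj_T cardsT => <-.
by apply: eq_bigl => d; rewrite inE.
Qed.

End G.


Section C.
Variables (n : nat) (kind : 'I_n -> bool) (R : realFieldType).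
Local Notation A := (grp kind).
Local Notation one := (gone kind).
Local Notation chi := (bichar R).
Implicit Types (a b c d e x y h : A) (g : {set 'I_n}) (f P : A -> R).

Lemma moment_conv f P a : moment (conv f P) a = moment f a * moment P a.
Proof.
rewrite /moment /conv.
under eq_bigr do rewrite mulr_sumr.
rewrite exchange_big mulr_suml /=; apply: eq_bigr => b _.
rewrite mulr_sumr (reindex_inj (@gmul_inj _ kind b)) /=.
apply: eq_bigr => x _; rewrite /ginv gmulK chi_mulr; ring.
Qed.

Lemma moment_delta a : moment (delta1 R) a = 1.
Proof.
rewrite /moment (bigD1 one) //= big1 ?addr0 /delta1 ?eqxx ?mulr1 ?chi1 //.
by move=> e /negbTE ->; rewrite mulr0.
Qed.

Lemma moment_family (Gamma : {set {set 'I_n}}) (Pg : {set 'I_n} -> A -> R) a :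
  moment (conv_family Gamma Pg) a = \prod_(g in Gamma) moment (Pg g) a.
Proof.
rewrite /conv_family.
apply: (big_morph (fun P => moment P a) (fun f P => moment_conv f P a) (moment_delta a)).
Qed.

Lemma inversion P b : #|A|%:R * P b = \sum_a chi a b * moment P a.
Proof.
rewrite /moment; under eq_bigr do rewrite mulr_sumr.
rewrite exchange_big /= (bigD1 b) //= [X in _ + X]big1 ?addr0.
  under eq_bigr do rewrite mulrA chi_sq mul1r.
  by rewrite sumr_const mulr_natl.
move=> e eb; under eq_bigr do rewrite mulrA -chi_mulr.
rewrite -mulr_suml; under eq_bigr do rewrite chiC.
by rewrite sum_chi_all gmul_eq1 eq_sym (negbTE eb) mulr0 mul0r.
Qed.

Lemma sum_G (G : {set A}) a : is_subgroup G -> a \notin perp G ->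
  \sum_(s in G) chi a s = 0.
Proof.
move=> [G1 GM]; rewrite inE => /forallPn [s0]; rewrite negb_imply negbK => /andP[s0G hs].
apply: (@sum_chi_flip _ _ R G a s0) => // h; apply/idP/idP => hh; last exact: GM.
by rewrite -(gmulK h s0); apply: GM.
Qed.

Lemma lc_sum (G : {set A}) P e :
  #|A|%:R * \sum_(s in G) P (gmul e s) = \sum_a moment P a * chi a e * \sum_(s in G) chi a s.
Proof.
rewrite mulr_sumr; under eq_bigr do rewrite inversion.
rewrite exchange_big /=; apply: eq_bigr => a _.
rewrite mulr_sumr; apply: eq_bigr => s _.
by rewrite chi_mulr mulrC mulrA.
Qed.

Lemma lc_eq (G : {set A}) P1 P2 : is_subgroup G ->
  (forall a, a \in perp G -> moment P1 a = moment P2 a) ->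
  forall e, logical_channel G P1 e = logical_channel G P2 e.
Proof.
move=> HG HE e; rewrite /logical_channel; congr (_ * _).
have hA : (#|A|%:R : R) != 0 by rewrite pnatr_eq0 -lt0n; apply/card_gt0P; exists one.
apply: (mulfI hA); rewrite !lc_sum; apply: eq_bigr => a _.
have [ha|ha] := boolP (a \in perp G); first by rewrite HE.
by rewrite sum_G // !mulr0.
Qed.

End C.


Section D.
Variables (n : nat) (kind : 'I_n -> bool) (R : realFieldType).
Local Notation A := (grp kind).
Local Notation one := (gone kind).
Local Notation chi := (bichar R).
Implicit Types (a b c d e x y h s : A) (g : {set 'I_n}) (f P : A -> R).

Variables (G M : {set A}) (Gamma : {set {set 'I_n}}).
Hypothesis HM : is_subgroup M.
Hypothesis Hreg : forall g1 g2, g1 \in Gamma -> g2 \in Gamma ->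
     correctable_region G M (g1 :|: g2).

Lemma perp_mul (B : {set A}) a b : a \in perp B -> b \in perp B -> gmul a b \in perp B.
Proof.
rewrite !inE => /forallP ha /forallP hb; apply/forallP => c.
by apply/implyP => cB; rewrite ganti_mull (negbTE (implyP (ha c) cB)) (negbTE (implyP (hb c) cB)).
Qed.
Lemma perp_one (B : {set A}) : one \in perp B.
Proof. by rewrite inE; apply/forallP => c; apply/implyP => _; rewrite gantiC ganti1. Qed.

Definition S : {set A} := [set e : A | [exists g in Gamma, supp e \subset g]].
Definition pk d := [pick e in S | gmul d e \in perp M].
Definition rep d := odflt d (pk d).
Definition T : {set A} := [set e in S | rep e == e].

Lemma pk_eq d d' : gmul d d' \in perp M -> pk d = pk d'.
Proof.
move=> h; apply: eq_pick => e /=; congr (_ && _); apply/idP/idP => he.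
  have -> : gmul d' e = gmul (gmul d d') (gmul d e).
    by rewrite gmulA [gmul (gmul d d') d]gmulC gmulA gmulxx [gmul one d']gmulC gmul1.
  exact: perp_mul.
have -> : gmul d e = gmul (gmul d d') (gmul d' e).
  by rewrite gmulA -[gmul (gmul d d') d']gmulA gmulxx gmul1.
exact: perp_mul.
Qed.

Lemma pk_some d : d \in S -> pk d = Some (rep d) /\ rep d \in S /\ gmul d (rep d) \in perp M.
Proof.
move=> dS; rewrite /rep /pk; case: pickP => [e /andP [eS he] | none] /=; first by [].
by move: (none d); rewrite dS gmulxx perp_one.
Qed.

Lemma rep_T d : d \in S -> rep d \in T.
Proof.
move=> dS; have [pd [rS hr]] := pk_some dS.
rewrite inE rS /=; apply/eqP; rewrite {1}/rep -(pk_eq hr) pd //.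
Qed.

Lemma T_uniq d e : d \in S -> e \in T -> gmul d e \in perp M -> e = rep d.
Proof.
move=> dS; rewrite inE => /andP [eS /eqP re] h.
have [pd _] := pk_some dS.
by rewrite -re /rep -(pk_eq (h : gmul d e \in perp M)) pd.
Qed.

Lemma uniq_sum a d : a \in perp G -> d \in S ->
  \sum_(e in T) chi a e * (gmul d e \in perp M)%:R = chi a d.
Proof.
move=> aG dS; have [pd [rS hr]] := pk_some dS.
rewrite (bigD1 (rep d)) ?rep_T //= big1 ?addr0 ?hr ?mulr1.
  have inG : gmul d (rep d) \in G.
    move: dS rS; rewrite !inE => /existsP [g1 /andP [g1G s1]] /existsP [g2 /andP [g2G s2]].
    apply: (Hreg g1G g2G) => //; apply: subset_trans (supp_mul _ _) _.
    by apply: setUSS.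
  have : chi a (gmul d (rep d)) = 1.
    by move: aG; rewrite inE => /forallP /(_ (gmul d (rep d))); rewrite inG /= /bichar => /negbTE ->.
  rewrite chi_mulr => h1.
  by rewrite -[chi a (rep d)]mul1r -(chi_sq R a d) -mulrA h1 mulr1.
move=> e /andP [eT ne]; case: (boolP (gmul d e \in perp M)) => h; last by rewrite mulr0.
by move: ne; rewrite (T_uniq dS eT h) eqxx.
Qed.


Lemma sum_M x : \sum_(s in M) chi s x = #|M|%:R * (x \in perp M)%:R.
Proof.
under eq_bigr do rewrite chiC.
have [hx|hx] := boolP (x \in perp M).
  rewrite mulr1; apply: sum_chi_triv => s sM.
  by move: hx; rewrite inE => /forallP /(_ s); rewrite sM /= => /negbTE.
rewrite mulr0; exact: sum_G.
Qed.

Lemma Aset_S g d : g \in Gamma -> d \in Aset kind g -> d \in S.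
Proof. by move=> gG; rewrite !inE => sd; apply/existsP; exists g; rewrite gG. Qed.

Lemma core g a y : g \in Gamma -> a \in perp G ->
  \sum_(s in M | proj g s == proj g y) \sum_(e in T) chi a e * chi s e
  = #|M|%:R * (proj g a == proj g y)%:R.
Proof.
move=> gG aG.
have hN : (#|Aset kind g|%:R : R) != 0.
  by rewrite pnatr_eq0 -lt0n; apply/card_gt0P; exists one; exact: one_Aset.
apply: (mulfI hN).
have ind s : #|Aset kind g|%:R * (proj g s == proj g y)%:R = \sum_(d in Aset kind g) chi s d * chi y d :> R.
  rewrite (_ : (proj g s == proj g y) = (proj g (gmul s y) == one)); last by rewrite proj_mul gmul_eq1.
  by rewrite -sum_chi_Aset; apply: eq_bigr => d _; rewrite chi_mull.
have E1 : #|Aset kind g|%:R * (\sum_(s in M | proj g s == proj g y) \sum_(e in T) chi a e * chi s e)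
  = \sum_(s in M) \sum_(d in Aset kind g) \sum_(e in T) chi y d * chi a e * chi s (gmul d e).
  rewrite big_mkcondr mulr_sumr; apply: eq_bigr => s _.
  rewrite (_ : forall (b : bool) (u v : R), u * (if b then v else 0) = u * b%:R * v); last first.
    by move=> [] u v; rewrite ?mulr1 ?mulr0 ?mul0r.
  rewrite ind mulr_suml; apply: eq_bigr => d _; rewrite mulr_sumr; apply: eq_bigr => e _.
  rewrite chi_mulr; ring.
have E2 : \sum_(s in M) \sum_(d in Aset kind g) \sum_(e in T) chi y d * chi a e * chi s (gmul d e)
  = \sum_(d in Aset kind g) chi y d * #|M|%:R * chi a d.
  rewrite exchange_big; apply: eq_bigr => d dA; rewrite exchange_big /=.
  rewrite -(uniq_sum aG (Aset_S gG dA)) !mulr_sumr; apply: eq_bigr => e _.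
  rewrite -mulr_sumr sum_M; ring.
rewrite E1 E2.
under eq_bigr do rewrite mulrAC -chi_mull.
by rewrite -mulr_suml sum_chi_Aset proj_mul gmul_eq1 eq_sym; ring.
Qed.


Definition cp a s : nat := \sum_(e in T | ganti a e == ganti s e) 1%N.
Definition cn a s : nat := \sum_(e in T | ganti a e != ganti s e) 1%N.

Lemma chi_split a s : \sum_(e in T) chi a e * chi s e = (cp a s)%:R - (cn a s)%:R.
Proof.
rewrite (bigID (fun e => ganti a e == ganti s e)) /= /cp /cn !natr_sum -sumrN.
congr (_ + _); apply: eq_bigr => e /andP [_ h].
  by rewrite /bichar -signr_addb (eqP h) addbb.
by rewrite /bichar -signr_addb; move: h; case: (ganti a e); case: (ganti s e).
Qed.

Lemma nat_id g a y : g \in Gamma -> a \in perp G ->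
  (\sum_(s in M | proj g s == y) cp a s =
   #|M| * (proj g a == y) + \sum_(s in M | proj g s == y) cn a s)%N.
Proof.
move=> gG aG.
have [yy|yy] := eqVneq y (proj g y).
  apply/eqP; rewrite -(eqr_nat R) natrD natrM !natr_sum.
  have h := core y gG aG; rewrite -yy in h.
  rewrite (eq_bigr _ (fun s _ => chi_split a s)) sumrB in h.
  by rewrite -h subrK.
have nf b : (proj g b == y) = false.
  by apply/negbTE; apply: contra_neq yy => <-; rewrite proj_proj.
by rewrite !big_pred0 ?nf ?muln0 // => s; rewrite nf andbF.
Qed.

Lemma lift g a (F : A -> R) : g \in Gamma -> a \in perp G ->
  (forall b, F b = F (proj g b)) ->
  F a ^+ #|M| * \prod_(s in M) F s ^+ cn a s = \prod_(s in M) F s ^+ cp a s.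
Proof.
move=> gG aG HF.
have H (c : A -> nat) : \prod_(s in M) F s ^+ c s = \prod_j F j ^+ (\sum_(s in M | proj g s == j) c s).
  rewrite (partition_big (proj g) predT) //=; apply: eq_bigr => j _; rewrite -prodrXr.
  by apply: eq_bigr => s /andP [_ /eqP <-]; rewrite -HF.
have Ha : F a ^+ #|M| = \prod_j F j ^+ (#|M| * (proj g a == j)).
  rewrite (bigD1 (proj g a)) //= big1 ?mulr1 ?eqxx ?muln1 -?HF //.
  by move=> j /negbTE; rewrite eq_sym => ->; rewrite muln0 expr0.
rewrite H H Ha -big_split /=; apply: eq_bigr => j _.
by rewrite -exprD nat_id.
Qed.

Lemma moment_proj (Pg : {set 'I_n} -> A -> R) g b :
  (forall e, ~~ (supp e \subset g) -> Pg g e = 0) ->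
  moment (Pg g) b = moment (Pg g) (proj g b).
Proof.
move=> hs; apply: eq_bigr => e _.
have [se|se] := boolP (supp e \subset g); first by rewrite /bichar (ganti_proj b se).
by rewrite hs // !mulr0.
Qed.

Lemma full_id (Pg : {set 'I_n} -> A -> R) a : local_family Gamma Pg -> a \in perp G ->
  let E := moment (conv_family Gamma Pg) in
  E a ^+ #|M| * \prod_(s in M) E s ^+ cn a s = \prod_(s in M) E s ^+ cp a s.
Proof.
move=> hl aG E; rewrite /E moment_family -prodrXl.
under [X in _ * X]eq_bigr do rewrite moment_family -prodrXl.
under [RHS]eq_bigr do rewrite moment_family -prodrXl.
rewrite exchange_big /= -big_split /= [RHS]exchange_big /=; apply: eq_bigr => g gG.
apply: (lift gG aG) => b; apply: moment_proj; exact: (proj2 (hl g gG)).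
Qed.

End D.

Theorem theorem2 (R : realFieldType) (n : nat) (kind : 'I_n -> bool)
  (G M : {set grp kind}) (Gamma : {set {set 'I_n}})
  (Pg1 Pg2 : {set 'I_n} -> grp kind -> R) :
  is_subgroup G -> is_subgroup M -> G \subset perp M ->
  local_family Gamma Pg1 -> correctable_channel G M Gamma Pg1 ->
  local_family Gamma Pg2 -> correctable_channel G M Gamma Pg2 ->
  (forall s, s \in M ->
     moment (conv_family Gamma Pg1) s = moment (conv_family Gamma Pg2) s) ->
  forall e, logical_channel G (conv_family Gamma Pg1) e
          = logical_channel G (conv_family Gamma Pg2) e.
Proof.
move=> HG HM _ hl1 [hreg hpos1] hl2 [_ hpos2] hEM.
apply: lc_eq => // a aG.
have i1 := full_id HM hreg hl1 aG.
have i2 := full_id HM hreg hl2 aG.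
simpl in i1, i2.
set E1 := moment (conv_family Gamma Pg1) in i1 hpos1 hEM *.
set E2 := moment (conv_family Gamma Pg2) in i2 hpos2 hEM *.
have eX : \prod_(s in M) E1 s ^+ cn M Gamma a s = \prod_(s in M) E2 s ^+ cn M Gamma a s.
  by apply: eq_bigr => s sM; rewrite hEM.
have eY : \prod_(s in M) E1 s ^+ cp M Gamma a s = \prod_(s in M) E2 s ^+ cp M Gamma a s.
  by apply: eq_bigr => s sM; rewrite hEM.
have nz : \prod_(s in M) E2 s ^+ cn M Gamma a s != 0.
  by apply: lt0r_neq0; apply: prodr_gt0 => s _; apply: exprn_gt0.
have : E1 a ^+ #|M| = E2 a ^+ #|M|.
  by apply: (mulIf nz); rewrite -{1}eX i1 i2 eY.
move/eqP; rewrite eqrXn2 ?ltW //; first by move/eqP.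
by apply/card_gt0P; exists (gone kind); case: HM.
Qed.
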